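(* Consider a system of $M$ conservation laws with state space $\mathcal D\subset\mathbb R^M$, entropy variables $\mathbf v=(v^1,\dots,v^M)$, entropy flux potential $\Psi$, and an entropy conservative two-point flux $\mathbf f^{\mathrm{EC}}$, i.e. $(\mathbf v(\mathbf u_R)-\mathbf v(\mathbf u_L))^T\mathbf f^{\mathrm{EC}}(\mathbf u_L,\mathbf u_R)=\Psi(\mathbf u_R)-\Psi(\mathbf u_L)$ for all $\mathbf u_L,\mathbf u_R\in\mathcal D$. Let an element $R$ with $N_R+1$ interface nodes, diagonal positive weight matrix $\mathbf M_R$ and edge length $\Delta_R>0$ share its edge with $E\ge1$ elements $L_1,\dots,L_E$ ($L_i$ with $N_{L_i}+1$ interface nodes, diagonal positive weight matrix $\mathbf M_{L_i}$, edge length $\Delta_{L_i}>0$, $\sum_i\Delta_{L_i}=\Delta_R$), and let $\mathbf P_{L_i2R}\in\mathbb R^{(N_R+1)\times(N_{L_i}+1)}$, $\mathbf P_{R2L_i}\in\mathbb R^{(N_{L_i}+1)\times(N_R+1)}$ satisfy $$\Delta_{L_i}\mathbf P_{R2L_i}^T\mathbf M_{L_i}=\Delta_R\mathbf M_R\mathbf P_{L_i2R},\qquad \mathbf P_{R2L_i}\mathbf 1^R=\mathbf 1^{L_i}\quad(i=1,\dots,E),\qquad \sum_{i=1}^E\mathbf P_{L_i2R}\mathbf 1^{L_i}=\mathbf 1^R.$$ For arbitrary states $\mathbf U^{L_i}_k,\mathbf U^R_j\in\mathcal D$ let $[\mathbf F^q_{L_i,R}]_{kj}=f^{\mathrm{EC},q}(\mathbf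 U^{L_i}_k,\mathbf U^R_j)$, $\mathbf F^{\mathrm{EC},q,R}=\sum_{i=1}^E\mathbb E(\mathbf P_{L_i2R}\mathbf F^q_{L_i,R})$, $\mathbf F^{\mathrm{EC},q,L_i}=\mathbb E(\mathbf P_{R2L_i}(\mathbf F^q_{L_i,R})^T)$, $V^{q,L_i}_k=v^q(\mathbf U^{L_i}_k)$, $V^{q,R}_j=v^q(\mathbf U^R_j)$, $\Psi^{L_i}_k=\Psi(\mathbf U^{L_i}_k)$, $\Psi^R_j=\Psi(\mathbf U^R_j)$. For a scalar $\lambda>0$ define the numerical surface fluxes $$\mathbf F^{\mathrm{ES},q,L_i}=\mathbf F^{\mathrm{EC},q,L_i}-\frac{\lambda}{2}\big(\mathbf P_{R2L_i}\mathbf V^{q,R}-\mathbf V^{q,L_i}\big),\qquad \mathbf F^{\mathrm{ES},q,R}=\mathbf F^{\mathrm{EC},q,R}-\frac{\lambda}{2}\sum_{i=1}^E\mathbf P_{L_i2R}\big(\mathbf P_{R2L_i}\mathbf V^{q,R}-\mathbf V^{q,L_i}\big).$$ Then the scheme is primary conservative and entropy stable at this interface: for every $q=1,\dots,M$, $$\Delta U^q:=\Delta_R(\mathbf 1^R)^T\mathbf M_R\mathbf F^{\mathrm{ES},q,R}-\sum_{i=1}^E\Delta_{L_i}(\mathbf 1^{L_i})^T\mathbf M_{L_i}\mathbf F^{\mathrm{ES},q,L_i}=0,$$ and $$\Delta S:=\Delta_R\Big(\sum_{q=1}^M(\mathbf V^{q,R})^T\mathbf M_R\mathbf F^{\mathrm{ES},q,R}-(\mathbf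 1^R)^T\mathbf M_R\boldsymbol\Psi^R\Big)-\sum_{i=1}^E\Delta_{L_i}\Big(\sum_{q=1}^M(\mathbf V^{q,L_i})^T\mathbf M_{L_i}\mathbf F^{\mathrm{ES},q,L_i}-(\mathbf 1^{L_i})^T\mathbf M_{L_i}\boldsymbol\Psi^{L_i}\Big)\le0.$$
   Context: Setting: a nodal discontinuous Galerkin spectral element method on Legendre–Gauss–Lobatto nodes (summation-by-parts operators) on a rectangular $h/p$ non-conforming mesh; a hyperbolic system with strongly convex entropy $S$, entropy variables $\mathbf v=\partial S/\partial\mathbf u$, entropy flux $F$, and entropy flux potential $\Psi=\mathbf v\cdot\mathbf f-F$ with $\mathbf f$ the interface-normal flux. One element $R$ is adjacent across one edge to $E$ elements $L_1,\dots,L_E$ stacked along that edge ($E=1$ covers the case of a conforming edge with differing polynomial degrees). $\Delta U^q$ and $\Delta S$ are (up to a common positive factor) the contributions of this interface to the time rate of change of the total integral of the $q$-th conserved variable and of the total entropy when entropy conservative volume fluxes are used; ''primary conservative'' means $\Delta U^q=0$ and ''entropy stable'' means $\Delta S\le 0$. Notation: $\mathbb E(\mathbf W)$ is the vector of diagonal entries of a square matrix $\mathbf W$; $\mathbf 1^R,\mathbf 1^{L_i}$ are all-ones vectors; $\mathbf V^{q,R},\mathbf V^{q,L_i},\boldsymbol\Psi^R,\boldsymbol\Psi^{L_i}$ are the vectors with the indicated entries. *)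

(* Defs.v *)
From HB Require Import structures.
From mathcomp Require Import all_boot all_order all_algebra.
Set Implicit Arguments. Unset Strict Implicit. Unset Printing Implicit Defensive.
Import Order.TTheory GRing.Theory Num.Theory.
Local Open Scope ring_scope.

Definition ones (R : pzRingType) (n : nat) : 'cV[R]_n := const_mx 1.
Arguments ones {R n}.

(* E(W): column vector of the diagonal entries of a square matrix W *)
Definition diag_col (R : pzRingType) (n : nat) (W : 'M[R]_n) : 'cV[R]_n :=
  \col_i W i i.

Definition quad (R : pzRingType) (m n : nat) (a : 'cV[R]_m) (W : 'M[R]_(m, n))
  (b : 'cV[R]_n) : R := (a^T *m W *m b) 0 0.

Definition Fmat (R : pzRingType) (M a b : nat)
  (fEC : 'cV[R]_M -> 'cV[R]_M -> 'cV[R]_M) (q : 'I_M)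
  (UL : 'I_a -> 'cV[R]_M) (UR : 'I_b -> 'cV[R]_M) : 'M[R]_(a, b) :=
  \matrix_(k, j) fEC (UL k) (UR j) q 0.

Definition Vvec (R : pzRingType) (M a : nat) (v : 'cV[R]_M -> 'cV[R]_M)
  (q : 'I_M) (U : 'I_a -> 'cV[R]_M) : 'cV[R]_a := \col_k v (U k) q 0.

Definition Psivec (R : pzRingType) (M a : nat) (Psi : 'cV[R]_M -> R)
  (U : 'I_a -> 'cV[R]_M) : 'cV[R]_a := \col_k Psi (U k).

(* Main.v *)
Require Import Defs.
From HB Require Import structures.
From mathcomp Require Import all_boot all_order all_algebra.
From mathcomp Require Import ring lra.
Import Order.TTheory GRing.Theory Num.Theory.
Set Implicit Arguments. Unset Strict Implicit. Unset Printing Implicit Defensive.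
Local Open Scope ring_scope.

From mathcomp Require Import ring lra.
Lemma diag_row (R : realFieldType) n (W : 'M[R]_n) (c : 'I_n -> R) j :
  is_diag_mx W -> \sum_l W j l * c l = W j j * c j.
Proof.
move=> /is_diag_mxP hW; rewrite (bigD1 j) //= big1 ?addr0 // => l hl.
by rewrite hW ?mul0r // eq_sym.
Qed.

Lemma diag_col' (R : realFieldType) n (W : 'M[R]_n) (c : 'I_n -> R) j :
  is_diag_mx W -> \sum_l c l * W l j = c j * W j j.
Proof.
move=> /is_diag_mxP hW; rewrite (bigD1 j) //= big1 ?addr0 // => l hl.
by rewrite hW ?mulr0.
Qed.

Lemma quad_diag (R : realFieldType) n (a b : 'cV[R]_n) (W : 'M[R]_n) :
  is_diag_mx W -> quad a W b = \sum_j a j 0 * W j j * b j 0.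
Proof.
move=> hW; rewrite /quad mxE; apply: eq_bigr => j _; rewrite mxE.
under eq_bigr do rewrite mxE.
by rewrite (@diag_col' _ _ _ (fun l => a l 0)).
Qed.

Lemma quadD (R : realFieldType) m n (a : 'cV[R]_m) W (b c : 'cV[R]_n) :
  quad a W (b + c) = quad a W b + quad a W c.
Proof. by rewrite /quad mulmxDr mxE. Qed.

Lemma quadN (R : realFieldType) m n (a : 'cV[R]_m) W (b : 'cV[R]_n) :
  quad a W (- b) = - quad a W b.
Proof. by rewrite /quad mulmxN mxE. Qed.

Lemma quadB (R : realFieldType) m n (a : 'cV[R]_m) W (b c : 'cV[R]_n) :
  quad a W (b - c) = quad a W b - quad a W c.
Proof. by rewrite quadD quadN. Qed.

Lemma quadZ (R : realFieldType) m n (a : 'cV[R]_m) W k (b : 'cV[R]_n) :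
  quad a W (k *: b) = k * quad a W b.
Proof. by rewrite /quad -scalemxAr mxE. Qed.

Lemma quad_sum (R : realFieldType) m n (a : 'cV[R]_m) W I (r : seq I) (b : I -> 'cV[R]_n) :
  quad a W (\sum_(i <- r) b i) = \sum_(i <- r) quad a W (b i).
Proof. by rewrite /quad mulmx_sumr summxE. Qed.

Lemma quadBl (R : realFieldType) m n (a c : 'cV[R]_m) (W : 'M[R]_(m, n)) (b : 'cV[R]_n) :
  quad (a - c) W b = quad a W b - quad c W b.
Proof. by rewrite /quad raddfB /= !mulmxBl [LHS]mxE [X in _ + X]mxE. Qed.

Lemma quad_sym (R : realFieldType) n (a b : 'cV[R]_n) (W : 'M[R]_n) :
  is_diag_mx W -> quad a W b = quad b W a.
Proof.
move=> hW; rewrite !quad_diag //; apply: eq_bigr => j _; ring.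
Qed.

Lemma quad_ge0 (R : realFieldType) n (a : 'cV[R]_n) (W : 'M[R]_n) :
  is_diag_mx W -> (forall j, 0 < W j j) -> 0 <= quad a W a.
Proof.
move=> hW hp; rewrite quad_diag //; apply: sumr_ge0 => j _.
rewrite mulrAC -expr2 mulr_ge0 ?sqr_ge0 //; exact: ltW.
Qed.

Lemma kmx (R : realFieldType) (k : R) (X : 'M[R]_1) : k * X 0 0 = (k *: X) 0 0.
Proof. by rewrite mxE. Qed.

Lemma transfer (R : realFieldType) nR nL (MR : 'M[R]_nR) (ML : 'M[R]_nL)
  (DR DL : R) (P : 'M[R]_(nR, nL)) (Q : 'M[R]_(nL, nR))
  (hP : DL *: (Q^T *m ML) = DR *: (MR *m P)) (a : 'cV[R]_nR) (b : 'cV[R]_nL) :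
  DR * quad a MR (P *m b) = DL * quad (Q *m a) ML b.
Proof.
rewrite /quad !kmx; congr (_ 0 0).
rewrite trmx_mul !mulmxA -(mulmxA a^T MR) -(mulmxA a^T Q^T).
by rewrite [DR *: _]scalemxAl [DL *: _]scalemxAl [DR *: _]scalemxAr [DL *: _]scalemxAr hP.
Qed.

Lemma entry_transfer (R : realFieldType) nR nL (MR : 'M[R]_nR) (ML : 'M[R]_nL)
  (DR DL : R) (P : 'M[R]_(nR, nL)) (Q : 'M[R]_(nL, nR))
  (hR : is_diag_mx MR) (hL : is_diag_mx ML)
  (hP : DL *: (Q^T *m ML) = DR *: (MR *m P)) (g : 'I_nR -> 'I_nL -> R) :
  DR * (\sum_j MR j j * \sum_k P j k * g j k) =
  DL * (\sum_k ML k k * \sum_j Q k j * g j k).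
Proof.
have he : forall j k, DL * (Q k j * ML k k) = DR * (MR j j * P j k).
  move=> j k; have := congr1 (fun X : 'M[R]_(nR, nL) => X j k) hP; rewrite /= !mxE.
  under eq_bigr do rewrite mxE.
  by rewrite (@diag_col' _ _ _ (fun l => Q l j)) // (@diag_row _ _ _ (fun l => P l k)).
rewrite !mulr_sumr; under eq_bigr do rewrite !mulr_sumr.
rewrite exchange_big /=; apply: eq_bigr => k _; rewrite !mulr_sumr.
apply: eq_bigr => j _; rewrite !mulrA -(mulrA DR) -he; ring.
Qed.

Lemma ec_R (R : realFieldType) nR nL (MR : 'M[R]_nR) (P : 'M[R]_(nR, nL))
  (F : 'M[R]_(nL, nR)) (a : 'cV[R]_nR) : is_diag_mx MR ->
  quad a MR (diag_col (P *m F)) = \sum_j MR j j * \sum_k P j k * (a j 0 * F k j).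
Proof.
move=> hR; rewrite quad_diag //; apply: eq_bigr => j _.
rewrite /diag_col !mxE mulr_sumr [RHS]mulr_sumr; apply: eq_bigr => k _; ring.
Qed.

Lemma ec_L (R : realFieldType) nR nL (ML : 'M[R]_nL) (Q : 'M[R]_(nL, nR))
  (F : 'M[R]_(nL, nR)) (c : 'cV[R]_nL) : is_diag_mx ML ->
  quad c ML (diag_col (Q *m F^T)) = \sum_k ML k k * \sum_j Q k j * (c k 0 * F k j).
Proof.
move=> hL; rewrite quad_diag //; apply: eq_bigr => k _.
rewrite /diag_col !mxE mulr_sumr [RHS]mulr_sumr; apply: eq_bigr => j _.
rewrite mxE; ring.
Qed.
Theorem theorem2 (R : realFieldType) (M : nat) (D : 'cV[R]_M -> Prop)
  (v : 'cV[R]_M -> 'cV[R]_M) (Psi : 'cV[R]_M -> R)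
  (fEC : 'cV[R]_M -> 'cV[R]_M -> 'cV[R]_M)
  (hEC : forall uL uR, D uL -> D uR ->
     (v uR - v uL)^T *m fEC uL uR = (Psi uR - Psi uL)%:M)
  (E : nat) (hE : (0 < E)%N)
  (NR : nat) (MR : 'M[R]_NR.+1) (DR : R)
  (NL : 'I_E -> nat) (ML : forall i, 'M[R]_((NL i).+1)) (DL : 'I_E -> R)
  (hMRd : is_diag_mx MR) (hMRp : forall j, 0 < MR j j)
  (hMLd : forall i, is_diag_mx (ML i)) (hMLp : forall i k, 0 < ML i k k)
  (hDR : 0 < DR) (hDL : forall i, 0 < DL i) (hsum : \sum_i DL i = DR)
  (PL2R : forall i, 'M[R]_(NR.+1, (NL i).+1))
  (PR2L : forall i, 'M[R]_((NL i).+1, NR.+1))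
  (hP : forall i, DL i *: ((PR2L i)^T *m ML i) = DR *: (MR *m PL2R i))
  (hPR2L1 : forall i, PR2L i *m ones = ones)
  (hPL2R1 : \sum_i PL2R i *m ones = ones)
  (UL : forall i, 'I_(NL i).+1 -> 'cV[R]_M) (UR : 'I_NR.+1 -> 'cV[R]_M)
  (hUL : forall i k, D (UL i k)) (hUR : forall j, D (UR j))
  (lambda : R) (hlam : 0 < lambda) :
  let F q i := Fmat fEC q (UL i) UR in
  let VR q := Vvec v q UR in
  let VL q i := Vvec v q (UL i) in
  let FESL q i := diag_col (PR2L i *m (F q i)^T)
                  - (lambda / 2) *: (PR2L i *m VR q - VL q i) in
  let FESR q := \sum_i diag_col (PL2R i *m F q i)
                - (lambda / 2) *: \sum_i PL2R i *m (PR2L i *m VR q - VL q i) in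
  (forall q, DR * quad ones MR (FESR q)
             - \sum_i DL i * quad ones (ML i) (FESL q i) = 0) /\
  DR * (\sum_q quad (VR q) MR (FESR q) - quad ones MR (Psivec Psi UR))
  - \sum_i DL i * (\sum_q quad (VL q i) (ML i) (FESL q i)
                   - quad ones (ML i) (Psivec Psi (UL i))) <= 0.
Proof.
move=> F VR VL FESL FESR.
have h2 : forall i x, DR * quad ones MR (PL2R i *m x) = DL i * quad ones (ML i) x.
  by move=> i x; rewrite (transfer (hP i)) hPR2L1.
split.
- move=> q.
  have h1 : forall i, DR * quad ones MR (diag_col (PL2R i *m F q i)) =
      DL i * quad ones (ML i) (diag_col (PR2L i *m (F q i)^T)).
    move=> i; rewrite ec_R // (entry_transfer hMRd (hMLd i) (hP i)
      (fun j k => ones j 0 * F q i k j)) ec_L //.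
    congr (_ * _); apply: eq_bigr => k _; congr (_ * _); apply: eq_bigr => j _.
    by rewrite /ones !mxE.
  rewrite /FESR quadB quad_sum quadZ quad_sum mulrBr mulrCA !mulr_sumr.
  under eq_bigr do rewrite h1.
  under [X in _ - X - _ = _]eq_bigr do rewrite h2.

  under [X in _ - X = _]eq_bigr do rewrite /FESL quadB quadZ mulrBr mulrCA.
  by rewrite sumrB -mulr_sumr subrr.
set c := lambda / 2.
have hc : 0 <= c by rewrite /c; lra.
pose x q i := PR2L i *m VR q - VL q i.
pose ecR q i := DR * quad (VR q) MR (diag_col (PL2R i *m F q i)).
pose ecL q i := DL i * quad (VL q i) (ML i) (diag_col (PR2L i *m (F q i)^T)).
pose dR q i := DR * quad (VR q) MR (PL2R i *m x q i).
pose dL q i := DL i * quad (VL q i) (ML i) (x q i).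
pose psR i := DR * quad (PL2R i *m ones) MR (Psivec Psi UR).
pose psL i := DL i * quad ones (ML i) (Psivec Psi (UL i)).
have e1 : forall q, DR * quad (VR q) MR (FESR q) = \sum_i (ecR q i - c * dR q i).
  move=> q; rewrite /FESR quadB quad_sum quadZ quad_sum mulrBr mulrCA !mulr_sumr.
  by rewrite -sumrB.
have e2 : forall i, DL i * (\sum_q quad (VL q i) (ML i) (FESL q i)
     - quad ones (ML i) (Psivec Psi (UL i))) = \sum_q (ecL q i - c * dL q i) - psL i.
  move=> i; rewrite mulrBr mulr_sumr; congr (_ - _); apply: eq_bigr => q _.
  by rewrite /FESL quadB quadZ mulrBr mulrCA.
have hd : forall i q, dR q i - dL q i = DL i * quad (x q i) (ML i) (x q i).
  by move=> i q; rewrite /dR /dL (transfer (hP i)) -mulrBr -quadBl.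
have hec : forall i, \sum_q (ecR q i - ecL q i) = psR i - psL i.
  move=> i.
  have hrow : forall k, \sum_j PR2L i k j = 1.
    move=> k; have := congr1 (fun X : 'cV[R]_(NL i).+1 => X k 0) (hPR2L1 i).
    rewrite /ones /= !mxE => <-; apply: eq_bigr => j _; by rewrite ?mxE mulr1.
  have hent : forall k j, \sum_q (VR q j 0 - VL q i k 0) * F q i k j
                          = Psi (UR j) - Psi (UL i k).
    move=> k j; have := congr1 (fun X : 'M[R]_1 => X 0 0) (hEC _ _ (hUL i k) (hUR j)).
    rewrite /= !mxE eqxx mulr1n => <-; apply: eq_bigr => q _.
    by rewrite /VR /VL /F /Vvec /Fmat !mxE.
  rewrite /psR quad_sym // (transfer (hP i)) quad_diag // /psL quad_diag //.
  under eq_bigr => q _ do rewrite /ecR /ecL ec_R // (entry_transfer hMRd (hMLd i) (hP i)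
      (fun j k => VR q j 0 * F q i k j)) ec_L // -mulrBr.
  rewrite -mulr_sumr -mulrBr; congr (_ * _).
  under eq_bigr do rewrite -sumrB.
  rewrite exchange_big -sumrB /=; apply: eq_bigr => k _.
  under eq_bigr do rewrite -mulrBr -sumrB.
  rewrite -mulr_sumr exchange_big /=.
  have -> : \sum_j \sum_q (PR2L i k j * (VR q j 0 * F q i k j) -
        PR2L i k j * (VL q i k 0 * F q i k j)) =
      \sum_j PR2L i k j * (Psi (UR j) - Psi (UL i k)).
    apply: eq_bigr => j _; rewrite -hent mulr_sumr; apply: eq_bigr => q _; ring.
  under eq_bigr do rewrite mulrBr.
  rewrite sumrB -mulr_suml hrow !mxE.
  under [X in _ = X * _ * _ - _]eq_bigr do rewrite mxE.
  ring.
have hpsi : \sum_i psR i = DR * quad ones MR (Psivec Psi UR).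
  rewrite /psR -mulr_sumr; congr (_ * _).
  under eq_bigr do rewrite quad_sym //.
  by rewrite -quad_sum hPL2R1 quad_sym.
rewrite mulrBr mulr_sumr; under eq_bigr do rewrite e1.
under [X in _ - X <= _]eq_bigr do rewrite e2.
rewrite -hpsi exchange_big /= -!sumrB; apply: sumr_le0 => i _.
have -> : \sum_q (ecR q i - c * dR q i) - psR i - (\sum_q (ecL q i - c * dL q i) - psL i)
   = (\sum_q (ecR q i - ecL q i) - (psR i - psL i)) - c * \sum_q (dR q i - dL q i).
  rewrite mulr_sumr; under [X in _ = _ - X]eq_bigr do rewrite mulrBr.
  rewrite !sumrB; ring.
rewrite hec subrr sub0r oppr_le0; apply: mulr_ge0 => //; apply: sumr_ge0 => q _.
rewrite hd; apply: mulr_ge0; first exact: ltW.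
exact: quad_ge0.
Qed.
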